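(* Let $\mathcal{H}$ be a real Hilbert space, $T\ge1$ an integer (known to the player), $G>0$, $\mathcal{G}=\{g\in\mathcal{H}:\|g\|\le G\}$, $\epsilon>0$, and $a>G^2\pi/2$. Consider the strategy that, for $t=0,\dots,T-1$, plays \[ w_{t+1}=\epsilon\,\hat\theta_t\,\frac{\exp\Big(\frac{(\|\theta_t\|+G)^2}{2aT-\pi G^2(T-t-1)}\Big)-\exp\Big(\frac{(\|\theta_t\|-G)^2}{2aT-\pi G^2(T-t-1)}\Big)}{2G\sqrt{1-\frac{\pi G^2(T-t-1)}{2aT}}}. \] Then for any sequence of linear costs $g_1,\dots,g_T\in\mathcal{G}$ and any $u\in\mathcal{H}$, \[ \operatorname{Regret}(u)\ \le\ \|u\|\sqrt{2aT\log\Big(\frac{\sqrt{aT}\,\|u\|}{\epsilon}+1\Big)}+\epsilon\Big(\Big(1-\frac{\pi G^2}{2a}\Big)^{-1/2}-1\Big). \]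
   Context: Online linear optimization: on rounds $t=1,\dots,T$ the player chooses $w_t\in\mathcal{H}$, the adversary chooses $g_t\in\mathcal{G}$, the player suffers loss $\langle w_t,g_t\rangle$. $\theta_t=-\sum_{s=1}^t g_s$ ($\theta_0=0$); $\hat\theta=\theta/\|\theta\|$ if $\theta\ne0$ and $\hat\theta=0$ otherwise. $\operatorname{Regret}(u)=\sum_{t=1}^T\langle g_t,w_t-u\rangle$. *)

(* Defs.v *)
From HB Require Import structures.
From mathcomp Require Import all_boot all_order all_algebra.
From mathcomp Require Import all_classical all_reals all_analysis.
Set Implicit Arguments. Unset Strict Implicit. Unset Printing Implicit Defensive.
Import Order.TTheory GRing.Theory Num.Theory.
Local Open Scope ring_scope.

Section Defs.
Variables (R : realType) (V : lmodType R) (ip : V -> V -> R).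

Definition is_inner_product : Prop :=
  [/\ forall x y, ip x y = ip y x,
      forall a x y z, ip (a *: x + y) z = a * ip x z + ip y z,
      forall x, 0 <= ip x x
    & forall x, ip x x = 0 -> x = 0].

Definition ipnorm (x : V) : R := Num.sqrt (ip x x).

Definition ip_complete : Prop :=
  forall u : nat -> V,
    (forall e : R, 0 < e -> exists N : nat, forall m n : nat,
        (N <= m)%N -> (N <= n)%N -> ipnorm (u m - u n) < e) ->
    exists l : V, forall e : R, 0 < e -> exists N : nat, forall n : nat,
        (N <= n)%N -> ipnorm (u n - l) < e.

Definition is_hilbert : Prop := is_inner_product /\ ip_complete.

(* theta_t = - sum_{s=1}^t g_s  (rounds indexed from 1; theta_0 = 0) *)
Definition theta (g : nat -> V) (t : nat) : V := - \sum_(1 <= s < t.+1) g s.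

Definition hat (th : V) : V :=
  if ipnorm th == 0 then 0 else (ipnorm th)^-1 *: th.

(* The strategy: w_{t+1} from theta_t, for t = 0, ..., T-1.
   player_w ... g t.+1 is w_{t+1}. *)
Definition player_w (T : nat) (G a eps : R) (g : nat -> V) (t1 : nat) : V :=
  let t := t1.-1 in
  let th := theta g t in
  let D := 2 * a * T%:R - pi * G ^+ 2 * (T%:R - t%:R - 1) in
  (eps * ((expR ((ipnorm th + G) ^+ 2 / D) - expR ((ipnorm th - G) ^+ 2 / D))
          / (2 * G * Num.sqrt (1 - pi * G ^+ 2 * (T%:R - t%:R - 1) / (2 * a * T%:R)))))
      *: hat th.

Definition regret (T : nat) (g w : nat -> V) (u : V) : R :=
  \sum_(1 <= t < T.+1) ip (g t) (w t - u).

End Defs.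

(* Main.v *)
Require Import Defs.
From HB Require Import structures.
From mathcomp Require Import all_boot all_order all_algebra.
From mathcomp Require Import all_classical all_reals all_analysis.
From mathcomp Require Import ring lra.
Import Order.TTheory GRing.Theory Num.Theory numFieldNormedType.Exports.
Local Open Scope ring_scope.
Set Implicit Arguments.

Section S.
Variable R : realType.

Lemma mono0 (f df : R -> R) : (forall x : R, is_derive x (1:R) f (df x)) ->
  (forall x, 0 <= x -> 0 <= df x) -> forall y, 0 <= y -> f 0 <= f y.
Proof.
move=> hd hpos y y0.
have [|c cin eq] := @MVT_segment R f df 0 y y0 (fun x _ => hd x).
  apply/continuous_subspaceT=> r.
  apply/differentiable_continuous/derivable1_diffP.
  by have [] := hd r.
rewrite -subr_ge0 eq mulr_ge0 ?subr0 //; apply: hpos.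
by move: cin; rewrite in_itv /= => /andP[].
Qed.

Lemma k_ge0 (y : R) : 0 <= y -> (1 - y) * expR y <= (1 + y) * expR (- y).
Proof.
move=> y0; rewrite -subr_ge0.
pose k : R -> R := fun z : R => (1 + z) * expR (- z) - (1 - z) * expR z.
have k0 : k 0 = 0 by rewrite /k oppr0 expR0; lra.
have -> : (1 + y) * expR (- y) - (1 - y) * expR y = k y by [].
rewrite -k0; apply: (@mono0 _ (fun z => z * (expR z - expR (- z)))) => //.
  move=> x.
  have -> : k = ((fun z : R => 1 + z) * (expR \o -%R) - (fun z : R => 1 - z) * expR : R -> R).
    by apply/funext => z.
  apply: is_derive_eq.
  by rewrite /GRing.scale /=; ring.
move=> x x0; rewrite mulr_ge0 // subr_ge0 ler_expR; lra.
Qed.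

Lemma h_le2 (y : R) : 0 <= y -> expR (y - y^+2/2) + expR (- y - y^+2/2) <= 2.
Proof.
move=> y0.
pose h : R -> R := fun z : R => - (expR (z - z^+2/2) + expR (- z - z^+2/2)).
have h0 : h 0 = -2 by rewrite /h !(expr0n, oppr0, mul0r, subr0) expR0; lra.
suff : h 0 <= h y by rewrite h0 /h; lra.
apply: (@mono0 _ (fun z => expR (- z^+2/2) * ((1 + z) * expR (- z) - (1 - z) * expR z))) => //.
  move=> x.
  have -> : h = ((- ((expR \o ((id : R -> R) - cst (2^-1) * (id ^+ 2))) + (expR \o (-%R - cst (2^-1) * (id ^+ 2))))) : R -> R).
    apply/funext => z /=; rewrite /h /=; by congr (- (expR _ + expR _)); rewrite !fctE /= mulrC.
  apply: is_derive_eq.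
  rewrite /GRing.scale /= !fctE /=.
  have e1 : expR (x - 2^-1 * x^+2) = expR x * expR (- x^+2/2).
    by rewrite -expRD; congr expR; field.
  have e2 : expR (- x - 2^-1 * x^+2) = expR (- x) * expR (- x^+2/2).
    by rewrite -expRD; congr expR; field.
  by rewrite e1 e2; field.
move=> x x0; rewrite mulr_ge0 ?expR_ge0 // subr_ge0; exact: k_ge0.
Qed.

Lemma cosh_le (y : R) : expR y + expR (- y) <= 2 * expR (y^+2/2).
Proof.
wlog y0 : y / 0 <= y.
  move=> H; have [/H //|/ltW yn] := leP 0 y.
  by have := H (- y); rewrite opprK sqrrN addrC; apply; rewrite oppr_ge0.
have := @h_le2 y y0.
have e1 : expR y = expR (y - y^+2/2) * expR (y^+2/2) by rewrite -expRD subrK.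
have e2 : expR (- y) = expR (- y - y^+2/2) * expR (y^+2/2) by rewrite -expRD subrK.
rewrite e1 e2 -mulrDl => H; apply: ler_wpM2r => //; exact: expR_ge0.
Qed.

Definition Pot (eps G a TT s x : R) :=
  eps * expR (x^+2 / (2*a*TT - pi*G^+2*s)) / Num.sqrt (1 - pi*G^+2*s/(2*a*TT)).

Lemma key1 (eps G a TT s x : R) : 0 < eps -> 0 < G -> 0 < a -> 0 < TT ->
  0 < 2*a*TT - pi*G^+2*(s+1) ->
  (Pot eps G a TT s (x+G) + Pot eps G a TT s (x-G))/2 <= Pot eps G a TT (s+1) x.
Proof.
move=> e0 G0 a0 T0 H.
have pi2 := @pi_ge2 R.
have G2 : 0 < G^+2 by rewrite exprn_gt0.
have piG : 2 * G^+2 <= pi * G^+2 by rewrite ler_wpM2r // ltW.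
set D := 2*a*TT - pi*G^+2*s.
set A := 2*a*TT.
have A0 : 0 < A by rewrite /A !mulr_gt0.
have hD0 : 2*a*TT - pi*G^+2*(s+1) = D - pi*G^+2 by rewrite /D; ring.
rewrite hD0 in H.
have Dp : 0 < D by apply: lt_le_trans H _; rewrite lerBlDr lerDl mulr_ge0 // ltW // (lt_le_trans _ pi2).
have hq1 : 1 - pi*G^+2*s/(2*a*TT) = D/A.
  by rewrite /D /A; field; rewrite !gt_eqF.
have hq0 : 1 - pi*G^+2*(s+1)/(2*a*TT) = (D - pi*G^+2)/A.
  by rewrite /D /A; field; rewrite !gt_eqF.
rewrite /Pot -/D -/A hq1 hq0 hD0.
set D0 := D - pi*G^+2.
set E := expR ((x^+2 + G^+2)/D).
have sa : expR ((x+G)^+2/D) + expR ((x-G)^+2/D) <= 2 * E * expR ((2*x*G/D)^+2/2).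
  have -> : expR ((x+G)^+2/D) = E * expR (2*x*G/D).
    by rewrite -expRD; congr expR; field; rewrite gt_eqF.
  have -> : expR ((x-G)^+2/D) = E * expR (- (2*x*G/D)).
    by rewrite -expRD; congr expR; field; rewrite gt_eqF.
  rewrite -mulrDr [2*E]mulrC -[E * 2 * _]mulrA; apply: ler_wpM2l; first exact: expR_ge0.
  exact: cosh_le.
have sb : E * expR ((2*x*G/D)^+2/2) <= expR (G^+2/D) * expR (x^+2/D0).
  rewrite /E -!expRD ler_expR.
  have D0p : 0 < D0 by [].
  have key : x^+2/D + 2*x^+2*G^+2/D^+2 <= x^+2/D0.
    rewrite -subr_ge0.
    have -> : x^+2/D0 - (x^+2/D + 2*x^+2*G^+2/D^+2) =
       x^+2 * (D^+2 - D0 * (D + 2*G^+2)) / (D^+2 * D0).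
      by field; rewrite !gt_eqF.
    apply: divr_ge0; last by rewrite mulr_ge0 // ltW // exprn_gt0.
    apply: mulr_ge0; first exact: sqr_ge0.
    rewrite subr_ge0 /D0.
    have h1 : (D - pi*G^+2) * (D + 2*G^+2) <= (D - 2*G^+2) * (D + 2*G^+2).
      apply: ler_wpM2r; first by apply: addr_ge0; [exact: ltW | rewrite mulr_ge0 // ltW].
      by rewrite lerB.
    apply: le_trans h1 _.
    have -> : (D - 2*G^+2) * (D + 2*G^+2) = D^+2 - (2*G^+2)^+2 by ring.
    by rewrite lerBlDr lerDl sqr_ge0.
  have -> : (x^+2 + G^+2)/D + (2*x*G/D)^+2/2 = G^+2/D + (x^+2/D + 2*x^+2*G^+2/D^+2).
    by field; rewrite gt_eqF.
  by rewrite lerD2l.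
have s0 : 0 < Num.sqrt (D0/A) by rewrite sqrtr_gt0 divr_gt0.
have s1 : 0 < Num.sqrt (D/A) by rewrite sqrtr_gt0 divr_gt0.
have sc : expR (G^+2/D) / Num.sqrt (D/A) <= 1 / Num.sqrt (D0/A).
  rewrite ler_pdivrMr // mul1r [_^-1 * _]mulrC ler_pdivlMr //.
  rewrite -[expR _]ger0_norm ?expR_ge0 // -sqrtr_sqr -sqrtrM ?sqr_ge0 //.
  rewrite ler_sqrt; last by rewrite divr_ge0 // ltW.
  rewrite -expRM_natl [_ * (D0/A)]mulrA ler_pM2r ?invr_gt0 //.
  set c := (2%:R * (G^+2/D)).
  have h1 : D - 2*G^+2 <= D * expR (- c).
    have -> : D - 2*G^+2 = D * (1 + - c) by rewrite /c; field; rewrite gt_eqF.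
    by apply: ler_wpM2l; [exact: ltW | exact: expR_ge1Dx].
  have h2 : D0 <= D - 2*G^+2 by rewrite /D0 lerB.
  apply: le_trans (ler_wpM2l (expR_ge0 c) (le_trans h2 h1)) _.
  by rewrite mulrCA expRxMexpNx_1 mulr1.
apply: (@le_trans _ _ (eps / Num.sqrt (D/A) * (expR (G^+2/D) * expR (x^+2/D0)))).
  have -> : (eps * expR ((x + G) ^+ 2 / D) / Num.sqrt (D / A) +
    eps * expR ((x - G) ^+ 2 / D) / Num.sqrt (D / A)) / 2 =
    eps / Num.sqrt (D/A) * ((expR ((x + G) ^+ 2 / D) + expR ((x - G) ^+ 2 / D)) / 2).
    by field; rewrite gt_eqF.
  apply: ler_wpM2l; first by rewrite divr_ge0 ?ltW.
  apply: le_trans sb.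
  by rewrite ler_pdivrMr // [X in _ <= X]mulrC [X in _ <= X]mulrA.
have -> : eps / Num.sqrt (D/A) * (expR (G^+2/D) * expR (x^+2/D0)) =
   eps * expR (x^+2/D0) * (expR (G^+2/D) / Num.sqrt (D/A)).
  by field; rewrite gt_eqF.
have -> : eps * expR (x^+2/D0) / Num.sqrt (D0/A) = eps * expR (x^+2/D0) * (1 / Num.sqrt (D0/A)).
  by rewrite mul1r.
by apply: ler_wpM2l => //; rewrite mulr_ge0 // ?expR_ge0 // ltW.
Qed.

Lemma conj_bound (eps a TT U x : R) : 0 < eps -> 0 < a -> 0 < TT -> 0 <= U -> 0 <= x ->
  U * x - eps * expR (x^+2 / (2*a*TT)) <=
  U * Num.sqrt (2*a*TT * ln (Num.sqrt (a*TT) * U / eps + 1)) - eps.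
Proof.
move=> e0 a0 T0 U0 x0'.
set s := Num.sqrt (a*TT).
have aT0 : 0 < a * TT by rewrite mulr_gt0.
have s0 : 0 < s by rewrite sqrtr_gt0.
have ss : s^+2 = a * TT by rewrite sqr_sqrtr // ltW.
set K := s * U / eps + 1.
have K1 : 1 <= K by rewrite lerDr divr_ge0 ?mulr_ge0 // ltW.
have L0 : 0 <= ln K by apply: ln_ge0.
set x0 := Num.sqrt (2*a*TT * ln K).
have A0 : 0 < 2*a*TT by rewrite !mulr_gt0.
have x00 : 0 <= x0 by apply: sqrtr_ge0.
have xx0 : x0^+2 = 2*a*TT * ln K.
  by rewrite sqr_sqrtr // mulr_ge0 // (ltW A0).
have ex0 : expR (x0^+2/(2*a*TT)) = K.
  rewrite xx0 mulrC mulKf ?gt_eqF // lnK //.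
  by rewrite posrE (lt_le_trans _ K1).
have [xle|xgt] := leP x x0.
  have h1 : U * x <= U * x0 by apply: ler_wpM2l.
  have h2 : 1 <= expR (x^+2/(2*a*TT)).
    have := expR_ge1Dx (x^+2/(2*a*TT)).
    have : 0 <= x^+2/(2*a*TT) by rewrite divr_ge0 ?sqr_ge0 // (ltW A0).
    lra.
  have h3 : eps <= eps * expR (x^+2/(2*a*TT)).
    by rewrite -{1}[eps]mulr1 ler_wpM2l // ltW.
  lra.
set d := x - x0.
set y := (x^+2 - x0^+2)/(2*a*TT).
have y0 : 0 <= y.
  rewrite divr_ge0 ?subr_ge0 ?(ltW A0) //.
  by rewrite ler_pXn2r ?nnegrE // (ltW xgt).
have hE : K * (1 + y) <= expR (x^+2/(2*a*TT)).
  have -> : expR (x^+2/(2*a*TT)) = K * expR y.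
    by rewrite -ex0 -expRD /y; congr expR; field; rewrite !gt_eqF.
  apply: ler_wpM2l; first by apply: le_trans K1.
  exact: expR_ge1Dx.
have hE2 : (s * U + eps) * (1 + y) <= eps * expR (x^+2/(2*a*TT)).
  have -> : s * U + eps = eps * K by rewrite /K; field; rewrite gt_eqF.
  by rewrite -[eps * K * _]mulrA; apply: ler_wpM2l => //; exact: ltW.
suff : U * d <= s * U + s * U * y.
  have : 0 <= eps * y by rewrite mulr_ge0 // ltW.
  rewrite /d; nra.
have yd : d^+2 / (2 * s^+2) <= y.
  rewrite /y ss [2 * (a * TT)]mulrA ler_pM2r ?invr_gt0 //.
  have -> : x^+2 - x0^+2 = d * (d + 2 * x0) by rewrite /d; ring.
  rewrite expr2; apply: ler_wpM2l; first by rewrite /d subr_ge0 ltW.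
  by rewrite lerDl mulr_ge0.
have h : s * U * (d^+2 / (2 * s^+2)) <= s * U * y by rewrite ler_wpM2l // mulr_ge0 // ltW.
apply: le_trans (lerD (lexx (s*U)) h); rewrite -subr_ge0.
have -> : s * U + s * U * (d^+2 / (2 * s^+2)) - U * d = U * (((d - s)^+2 + s^+2) / (2 * s)).
  by field; rewrite gt_eqF.
by rewrite mulr_ge0 // divr_ge0 ?addr_ge0 ?sqr_ge0 // mulr_ge0 // ltW.
Qed.
End S.
Arguments Pot {R}.

Unset Strict Implicit.

Section H.
Variables (R : realType) (V : lmodType R) (ip : V -> V -> R).
Hypothesis Hip : is_inner_product ip.

Lemma ipC x y : ip x y = ip y x. Proof. by case: Hip. Qed.
Lemma ip_ge0 x : 0 <= ip x x. Proof. by case: Hip. Qed.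
Lemma ip_eq0 x : ip x x = 0 -> x = 0. Proof. by case: Hip => _ _ _ H /H. Qed.
Lemma ipL a x y z : ip (a *: x + y) z = a * ip x z + ip y z. Proof. by case: Hip. Qed.

Lemma ip0l z : ip 0 z = 0.
Proof. have := ipL 1 0 0 z; rewrite scaler0 !addr0 mul1r; lra. Qed.
Lemma ipDl x y z : ip (x + y) z = ip x z + ip y z.
Proof. by rewrite -[x]scale1r ipL mul1r scale1r. Qed.
Lemma ipZl a x z : ip (a *: x) z = a * ip x z.
Proof. by rewrite -[a *: x]addr0 ipL ip0l addr0. Qed.
Lemma ipNl x z : ip (- x) z = - ip x z.
Proof. by rewrite -scaleN1r ipZl mulN1r. Qed.
Lemma ip0r z : ip z 0 = 0. Proof. by rewrite ipC ip0l. Qed.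
Lemma ipDr x y z : ip z (x + y) = ip z x + ip z y.
Proof. by rewrite ipC ipDl !(ipC z). Qed.
Lemma ipZr a x z : ip z (a *: x) = a * ip z x.
Proof. by rewrite ipC ipZl ipC. Qed.
Lemma ipNr x z : ip z (- x) = - ip z x.
Proof. by rewrite ipC ipNl ipC. Qed.

Lemma ipnorm_ge0 x : 0 <= ipnorm ip x. Proof. exact: sqrtr_ge0. Qed.
Lemma ipnorm_sqr x : ipnorm ip x ^+ 2 = ip x x. Proof. by rewrite sqr_sqrtr ?ip_ge0. Qed.

Lemma cs_sqr x y : ip x y ^+ 2 <= ip x x * ip y y.
Proof.
have [A0|Apos] := eqVneq (ip x x) 0.
  by rewrite A0 mul0r (@ip_eq0 x A0) ip0l expr0n.
have Ap : 0 < ip x x by rewrite lt_def Apos ip_ge0.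
set A := ip x x; set B := ip x y; set C := ip y y.
have := ip_ge0 ((- (B / A)) *: x + y).
rewrite ipL !ipDr !ipZr ipC -/B -/A -/C.
rewrite (ipC y x) -/B => h.
have e : - (B / A) * (- (B / A) * A + B) + (- (B / A) * B + C) = C - B^+2 / A.
  by field.
rewrite e subr_ge0 ler_pdivrMr // in h.
by rewrite mulrC.
Qed.

Lemma cs x y : `|ip x y| <= ipnorm ip x * ipnorm ip y.
Proof.
rewrite -sqrtr_sqr /ipnorm -sqrtrM ?ip_ge0 // ler_sqrt ?mulr_ge0 ?ip_ge0 //.
exact: cs_sqr.
Qed.


Lemma expR_cvx (u v l : R) : 0 <= l -> l <= 1 ->
  expR (l * u + (1 - l) * v) <= l * expR u + (1 - l) * expR v.
Proof.
move=> l0 l1; set m := l * u + (1 - l) * v.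
have hu : expR m * (1 + (u - m)) <= expR u.
  rewrite -[expR u](_ : expR m * expR (u - m) = _); last by rewrite -expRD addrC subrK.
  by apply: ler_wpM2l; [exact: expR_ge0 | exact: expR_ge1Dx].
have hv : expR m * (1 + (v - m)) <= expR v.
  rewrite -[expR v](_ : expR m * expR (v - m) = _); last by rewrite -expRD addrC subrK.
  by apply: ler_wpM2l; [exact: expR_ge0 | exact: expR_ge1Dx].
have e : l * (expR m * (1 + (u - m))) + (1 - l) * (expR m * (1 + (v - m))) = expR m.
  by rewrite /m; ring.
rewrite -{1}e; apply: lerD; apply: ler_wpM2l => //; lra.
Qed.

Lemma round (eps G a TT s : R) (th g : V) :
  0 < eps -> 0 < G -> 0 < a -> 0 < TT -> 0 < 2*a*TT - pi*G^+2*(s+1) ->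
  ipnorm ip g <= G ->
  Pot eps G a TT s (ipnorm ip (th - g)) +
  ip g ((eps * ((expR ((ipnorm ip th + G)^+2 / (2*a*TT - pi*G^+2*s))
                - expR ((ipnorm ip th - G)^+2 / (2*a*TT - pi*G^+2*s)))
          / (2 * G * Num.sqrt (1 - pi*G^+2*s/(2*a*TT))))) *: hat ip th)
  <= Pot eps G a TT (s+1) (ipnorm ip th).
Proof.
move=> e0 G0 a0 T0 H gG.
have pi2 := @pi_ge2 R.
have G2 : 0 < G^+2 by rewrite exprn_gt0.
set D := 2*a*TT - pi*G^+2*s.
have Dp : 0 < D.
  apply: lt_le_trans H _; rewrite /D lerB // ler_wpM2l ?lerDl //.
  by rewrite mulr_ge0 // ltW // (lt_le_trans _ pi2).
have A0 : 0 < 2*a*TT by rewrite !mulr_gt0.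
set sq := Num.sqrt (1 - pi*G^+2*s/(2*a*TT)).
have sqp : 0 < sq.
  rewrite sqrtr_gt0 (_ : 1 - pi*G^+2*s/(2*a*TT) = D/(2*a*TT)) ?divr_gt0 //.
  by rewrite /D; field; rewrite !gt_eqF.
set x := ipnorm ip th.
have x0 : 0 <= x by apply: ipnorm_ge0.
set Q := fun y : R => eps * expR (y / D) / sq.
have PQ z : Pot eps G a TT s z = Q (z^+2) by [].
have Qmono y1 y2 : y1 <= y2 -> Q y1 <= Q y2.
  move=> y12; rewrite /Q ler_pM2r ?invr_gt0 // ler_pM2l // ler_expR.
  by rewrite ler_pM2r ?invr_gt0.
set c := eps * (_ / _).
have ce : c = (Pot eps G a TT s (x + G) - Pot eps G a TT s (x - G)) / (2 * G).
  by rewrite /c !PQ /Q; field; rewrite !gt_eqF.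
have K := @key1 R eps G a TT s x e0 G0 a0 T0 H.
have [xz|xnz] := eqVneq x 0.
  have thz : th = 0 by apply: (@ip_eq0 th); rewrite -ipnorm_sqr -/x xz expr0n.
  rewrite /hat -/x xz eqxx scaler0 ip0r addr0 thz sub0r.
  rewrite xz in K; apply: le_trans K.
  have -> : ipnorm ip (- g) = ipnorm ip g by rewrite /ipnorm ipNl ipNr opprK.
  rewrite !PQ add0r sub0r sqrrN (_ : (Q (G^+2) + Q (G^+2)) / 2 = Q (G^+2)); last by field.
  apply: Qmono; rewrite ler_pXn2r ?nnegrE ?ipnorm_ge0 // ltW //.
have xp : 0 < x by rewrite lt_def xnz x0.
rewrite /hat -/x (negbTE xnz) ipZr ipZr.
set B := ip g th.
have hB : `|B| <= G * x.
  rewrite /B; apply: le_trans (cs g th) _; rewrite -/x ler_wpM2r //.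
set be := B / x.
have beG : - G <= be <= G.
  rewrite -ler_norml /be normrM normrV ?unitfE // (ger0_norm x0) ler_pdivrMr //.
case/andP: beG => bl bu.
have nrm : ipnorm ip (th - g) ^+ 2 <= x^+2 - 2 * x * be + G^+2.
  rewrite ipnorm_sqr ipDl !ipDr ipNl !ipNr ipNl opprK -!ipnorm_sqr -/x (ipC th g) -/B /be.
  have : ipnorm ip g ^+2 <= G^+2 by rewrite ler_pXn2r ?nnegrE ?ipnorm_ge0 // ltW.
  have -> : 2 * x * (B / x) = 2 * B by field; rewrite gt_eqF.
  lra.
set l := (G - be) / (2 * G).
have l0 : 0 <= l by apply: divr_ge0; [lra | rewrite mulr_ge0 // ltW].
have l1 : l <= 1 by rewrite /l ler_pdivrMr ?mulr_gt0 //; lra.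
have cv : expR ((x^+2 - 2 * x * be + G^+2) / D) <=
   l * expR ((x + G)^+2 / D) + (1 - l) * expR ((x - G)^+2 / D).
  have -> : (x^+2 - 2 * x * be + G^+2) / D = l * ((x + G)^+2 / D) + (1 - l) * ((x - G)^+2 / D).
    by rewrite /l; field; rewrite !gt_eqF.
  exact: expR_cvx.
apply: le_trans K.
rewrite PQ; apply: le_trans (lerD (Qmono _ _ nrm) (lexx _)) _.
rewrite ce /Q !PQ.
rewrite /Q [x^-1 * B]mulrC -/be.
set e1 := expR ((x + G)^+2 / D); set e2 := expR ((x - G)^+2 / D).
apply: (@le_trans _ _ (eps / sq * (l * e1 + (1 - l) * e2) + (eps * e1 / sq - eps * e2 / sq) / (2 * G) * be)).
  rewrite lerD2r mulrAC; apply: ler_wpM2l => //.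
  by rewrite divr_ge0 // ltW.
by rewrite le_eqVlt; apply/orP; left; apply/eqP; rewrite /l; field; rewrite !gt_eqF.
Qed.
End H.

Unset Implicit Arguments.
Set Strict Implicit.

Theorem theorem11 (R : realType) (V : lmodType R) (ip : V -> V -> R)
  (HV : is_hilbert ip) (T : nat) (G eps a : R)
  (hT : (1 <= T)%N) (hG : 0 < G) (heps : 0 < eps)
  (ha : G ^+ 2 * pi / 2 < a)
  (g : nat -> V)
  (hg : forall t : nat, (1 <= t <= T)%N -> ipnorm ip (g t) <= G)
  (u : V) :
  regret ip T g (player_w ip T G a eps g) u <=
    ipnorm ip u * Num.sqrt (2 * a * T%:R *
       ln (Num.sqrt (a * T%:R) * ipnorm ip u / eps + 1))
    + eps * ((Num.sqrt (1 - pi * G ^+ 2 / (2 * a)))^-1 - 1).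
Proof.
have Hip : is_inner_product ip by case: HV.
set TT : R := T%:R.
have T0 : 0 < TT by rewrite /TT ltr0n.
have pi2 := @pi_ge2 R.
have G2 : 0 < G^+2 by rewrite exprn_gt0.
have hpg : pi * G^+2 < 2 * a.
  by move: ha; rewrite ltr_pdivrMr //; lra.
have a0 : 0 < a.
  apply: lt_trans ha; rewrite divr_gt0 // mulr_gt0 // (lt_le_trans _ pi2) //.
set W := player_w ip T G a eps g.
have claim n : (n <= T)%N -> \sum_(1 <= t < n.+1) ip (g t) (W t) <=
    Pot eps G a TT TT 0 - Pot eps G a TT (TT - n%:R) (ipnorm ip (theta g n)).
  elim: n => [_|n IH hn].
    rewrite big_geq // subr0 /theta big_geq // oppr0.
    rewrite (_ : ipnorm ip 0 = 0) ?subrr //.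
    by rewrite /ipnorm ip0l // sqrtr0.
  have hs : TT - n%:R - 1 + 1 = TT - n%:R by rewrite subrK.
  have hs2 : TT - n.+1%:R = TT - n%:R - 1 by rewrite -addn1 natrD opprD addrA.
  have thS : theta g n.+1 = theta g n - g n.+1.
    by rewrite /theta big_nat_recr //= opprD.
  have Hpos : 0 < 2*a*TT - pi*G^+2*(TT - n%:R - 1 + 1).
    rewrite hs.
    have h1 : pi * G^+2 * (TT - n%:R) <= pi * G^+2 * TT.
      apply: ler_wpM2l; first by rewrite mulr_ge0 // ltW // (lt_le_trans _ pi2).
      by rewrite lerBlDr lerDl.
    have h2 : pi * G^+2 * TT < 2 * a * TT by rewrite ltr_pM2r.
    lra.
  have hgn : ipnorm ip (g n.+1) <= G by apply: hg; rewrite hn.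
  have R1 := @round R V ip Hip eps G a TT (TT - n%:R - 1) (theta g n) (g n.+1) heps hG a0 T0 Hpos hgn.
  rewrite hs -thS in R1.
  have IH' := IH (ltnW hn).
  rewrite big_nat_recr //= hs2.
  rewrite /W /player_w /= in IH' *.
  lra.
have main := claim T (leqnn T).
set th := theta g T.
have e1 : regret ip T g W u = \sum_(1 <= t < T.+1) ip (g t) (W t) + ip th u.
  rewrite /regret /th /theta ipNl ?opprK //.
  rewrite (big_morph (fun x => ip x u) (fun x y => ipDl Hip x y u) (ip0l Hip u)).
  rewrite -sumrB; apply: eq_bigr => t _; rewrite ipDr // ipNr //.
rewrite e1.
rewrite -/th (_ : TT - T%:R = 0) ?subrr // in main.
have P0 : Pot eps G a TT TT 0 = eps / Num.sqrt (1 - pi*G^+2/(2*a)).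
  rewrite /Pot expr0n mul0r expR0 mulr1; congr (_ / Num.sqrt _).
  by field; rewrite !gt_eqF.
have P1 y : Pot eps G a TT 0 y = eps * expR (y^+2/(2*a*TT)).
  by rewrite /Pot !mulr0 !subr0 mul0r subr0 sqrtr1 divr1.
have cb := @conj_bound R eps a TT _ _ heps a0 T0 (ipnorm_ge0 ip u) (ipnorm_ge0 ip th).
have csi : ip th u <= ipnorm ip th * ipnorm ip u.
  exact: le_trans (ler_norm _) (cs Hip th u).
rewrite P0 P1 in main.
lra.
Qed.
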